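(* Let $r\geq 2$, $l\in\{0,1,\ldots,r-1\}$ and $n\geq 1$ be integers, and define the polynomial $$h(s)=\sum_{k=0}^{n}(-1)^k\binom{r(n-k)+k+l}{k}s^{n-k}.$$ Then all roots of $h$ are real and lie in the open interval $\left(0,\ r^r/(r-1)^{r-1}\right)$. Moreover $r^r/(r-1)^{r-1}<er$, where $e$ is Euler's number, so all roots lie in $(0,er)$. *)

(* Defs.v *)
(* for the polynomial (roots in algC, the algebraic closure of Q,
   which contains all complex roots of an integer polynomial); Stdlib Reals only
   for the final inequality involving Euler's number e = exp 1. *)
From HB Require Import structures.
From mathcomp Require Import all_boot all_order all_algebra all_field.
Set Implicit Arguments. Unset Strict Implicit. Unset Printing Implicit Defensive.
Import Order.TTheory GRing.Theory Num.Theory.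
Local Open Scope ring_scope.

Definition hpoly (r l n : nat) : {poly algC} :=
  \sum_(k < n.+1)
     (((-1) ^+ k * ('C(r * (n - k) + k + l, k)%N)%:R) *: 'X^(n - k)%N).

Definition hbound (r : nat) : algC :=
  (r ^ r)%N%:R / ((r - 1) ^ (r - 1))%N%:R.

(* Main.v *)
Require Import Defs.
From HB Require Import structures.
From mathcomp Require Import all_boot all_order all_algebra all_field.
From Stdlib Require Import Reals.
Import Order.TTheory GRing.Theory Num.Theory.
Local Open Scope ring_scope.

From Stdlib Require Import Lra Lia.
Section RealPart.
Local Open Scope R_scope.

Lemma powlt (x y : R) n : 0 <= x -> x < y -> lt 0 n -> x ^ n < y ^ n.
Proof.
intros hx hxy hn; induction n as [|n IH]; [lia|].
destruct n as [|n].
- simpl; lra.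
- assert (h1 : x ^ S n < y ^ S n) by (apply IH; lia).
  assert (h2 : 0 <= x ^ S n) by (apply pow_le; lra).
  change (x * x ^ S n < y * y ^ S n).
  apply Rle_lt_trans with (x * y ^ S n).
  + apply Rmult_le_compat_l; lra.
  + apply Rmult_lt_compat_r; [apply pow_lt; lra| lra].
Qed.

Lemma exp_pow_n (a : R) n : exp a ^ n = exp (INR n * a).
Proof.
induction n as [|n IH].
- simpl; rewrite Rmult_0_l exp_0; reflexivity.
- rewrite S_INR; simpl; rewrite IH -exp_plus; f_equal; ring.
Qed.

Lemma real_part (r : nat) : le 2 r ->
  Rlt (Rdiv (pow (INR r) r) (pow (INR (r - 1)) (r - 1))) (Rmult (exp (IZR 1)) (INR r)).
Proof.
intros hr.
destruct r as [|m]; first lia.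
have e : subn m.+1 1 = m by rewrite subn1.
rewrite e.
assert (hm1 : le 1 m) by lia.
assert (Hm : 1 <= INR m) by (apply (le_INR 1 m) in hm1; simpl in hm1; lra).
rewrite S_INR.
set q := (INR m + 1) / INR m.
assert (hq : INR m + 1 = q * INR m) by (unfold q; field; lra).
assert (E : (INR m + 1) ^ S m / INR m ^ m = (INR m + 1) * q ^ m).
{ simpl pow at 1. rewrite {2}hq Rpow_mult_distr.
  field. apply pow_nonzero; lra. }
rewrite E.
assert (hq2 : q = 1 + / INR m) by (unfold q; field; lra).
assert (H1 : q < exp (/ INR m)).
{ rewrite hq2. apply exp_ineq1. apply Rgt_not_eq. apply Rinv_0_lt_compat; lra. }
assert (H2 : q ^ m < exp 1).
{ apply Rlt_le_trans with (exp (/ INR m) ^ m).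
  - apply powlt; [| exact H1 | lia]. rewrite hq2.
    assert (0 < / INR m) by (apply Rinv_0_lt_compat; lra). lra.
  - rewrite exp_pow_n. right; f_equal; field; lra. }
rewrite (Rmult_comm (exp (IZR 1))).
apply Rmult_lt_compat_l; [lra | exact H2].
Qed.

End RealPart.

From mathcomp Require Import zify ring.
From mathcomp Require polyrcf.
Section Coefs.
Variable R : comNzRingType.
Variable r : nat.
Hypothesis r_gt0 : (0 < r)%nat.

Definition hP (l n : nat) : {poly R} :=
  \sum_(k < n.+1)
     (((-1) ^+ k * ('C(r * (n - k) + k + l, k)%nat)%:R) *: 'X^(n - k)%nat).

Definition cf l n i : R :=
  if (i <= n)%nat then (-1) ^+ (n - i) * ('C(r * i + (n - i) + l, n - i))%:R else 0.

Lemma coef_hP l n i : (hP l n)`_i = cf l n i.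
Proof.
rewrite /hP coef_sum.
under eq_bigr do rewrite coefZ coefXn.
rewrite /cf; case: leqP => hin.
  have hk : (n - i < n.+1)%nat by lia.
  rewrite (bigD1 (Ordinal hk)) //= big1 ?addr0.
    by rewrite subKn // eqxx mulr1 [(r * i + _ + _)%nat]addnAC.
  move=> k /eqP hk2; case: eqP => [hik|]; last by rewrite mulr0.
  by exfalso; apply: hk2; apply: val_inj => /=; have := ltn_ord k; lia.
rewrite big1 // => k _; case: eqP => [hik|]; last by rewrite mulr0.
by exfalso; have := ltn_ord k; lia.
Qed.

Lemma hP_recA l n : hP l.+1 n.+1 = hP l n.+1 - hP l.+1 n.
Proof.
apply/polyP => i; rewrite coefB !coef_hP /cf.
case: (ltngtP i n.+1) => hi.
- have hin : (i <= n)%nat by lia.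
  rewrite hin.
  have e1 : (n.+1 - i = (n - i).+1)%nat by lia.
  have e2 : (r * i + (n - i).+1 + l.+1 = (r * i + (n - i).+1 + l).+1)%nat by lia.
  have e3 : (r * i + (n - i) + l.+1 = r * i + (n - i).+1 + l)%nat by lia.
  rewrite e1 e2 e3 binS natrD exprS; ring.
- have -> : (i <= n)%nat = false by lia.
  by rewrite subr0.
- subst i; have -> : (n.+1 <= n)%nat = false by lia.
  by rewrite subnn !bin0 subr0.
Qed.

Lemma hP_recB n : hP 0 n.+1 = 'X * hP r.-1 n - hP 0 n.
Proof.
apply/polyP => i; rewrite coefB coefXM !coef_hP /cf.
case: i => [|j] /=.
  by rewrite !subn0 !muln0 !add0n !addn0 !binn exprS; ring.
have [hj|[hj|hj]] : ((j < n)%nat \/ (n < j)%nat \/ j = n) by lia.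
- have -> : (j < n.+1)%nat = true by lia.
  have -> : (j <= n)%nat = true by lia.
  rewrite hj.
  have e1 : (n.+1 - j.+1 = (n - j.+1).+1)%nat by lia.
  have e2 : (n - j = (n - j.+1).+1)%nat by lia.
  have e3 : (r * j.+1 + (n - j.+1).+1 + 0 = (r * j.+1 + (n - j.+1)).+1)%nat by lia.
  have e4 : (r * j + (n - j.+1).+1 + r.-1 = r * j.+1 + (n - j.+1))%nat.
    by rewrite mulnS; lia.
  rewrite e1 e2 e3 e4 binS natrD exprS addn0; ring.
- have -> : (j < n.+1)%nat = false by lia.
  have -> : (j <= n)%nat = false by lia.
  have -> : (j < n)%nat = false by lia.
  by rewrite subr0.
- subst j; by rewrite ltnSn leqnn ltnn !subnn !bin0 subr0.
Qed.

End Coefs.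
Section Roots.
Variable R : rcfType.

Lemma sgprod (f : nat -> R) t k m : (k <= m)%nat ->
  (forall b, (b < k)%nat -> f b < t) -> (forall b, (k <= b)%nat -> (b < m)%nat -> t < f b) ->
  0 < (-1) ^+ (m - k) * \prod_(b < m) (t - f b).
Proof.
elim: m => [|m IH] hk hlo hhi.
  have -> : k = 0%nat by lia.
  by rewrite big_ord0 expr0 mulr1.
have [ek|ek] : (k = m.+1 \/ k <= m)%nat by lia.
  subst k; rewrite subnn expr0 mul1r prodr_gt0 // => b _.
  by rewrite subr_gt0 hlo.
rewrite big_ord_recr /= subSn // exprS.
have h1 := IH ek hlo (fun b h1 h2 => hhi b h1 (ltnW h2)).
have h2 : 0 < f m - t by rewrite subr_gt0 hhi.
have -> : (-1 * (-1) ^+ (m - k) * ((\prod_(i < m) (t - f i)) * (t - f m)))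
   = ((-1) ^+ (m - k) * \prod_(i < m) (t - f i)) * (f m - t) by ring.
exact: mulr_gt0.
Qed.

Lemma find_roots (p : {poly R}) m (lo hi : nat -> R) :
  size p = m.+1 -> p \is monic ->
  (forall j, (j < m)%nat -> lo j < hi j) ->
  (forall j, (j.+1 < m)%nat -> hi j <= lo j.+1) ->
  (forall j, (j < m)%nat -> p.[lo j] * p.[hi j] < 0) ->
  exists y : nat -> R, (forall j, (j < m)%nat -> lo j < y j < hi j) /\
     p = \prod_(j < m) ('X - (y j)%:P).
Proof.
move=> sp mp hlh hhl hsg.
have : forall m', (m' <= m)%nat -> exists y : nat -> R,
    forall j, (j < m')%nat -> (lo j < y j < hi j) && root p (y j).
  elim=> [|m' IH] hm'; first by exists (fun _ => 0).
  have [y hy] := IH (ltnW hm').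
  have [z hz rz] := polyrcf.poly_ivtoo (ltW (hlh m' hm')) (hsg m' hm').
  exists (fun j => if j == m' then z else y j) => j hj.
  case: eqP => [->|hne]; first by rewrite rz andbT; move: hz; rewrite in_itv.
  by apply: hy; lia.
move=> /(_ m (leqnn m)) [y hy].
have hy1 j : (j < m)%nat -> lo j < y j < hi j by move=> /hy /andP[].
have hy2 j : (j < m)%nat -> root p (y j) by move=> /hy /andP[].
have hinc : forall j j', (j < j')%nat -> (j' < m)%nat -> y j < y j'.
  move=> j j'; elim: j' => [//|j' IH] hjj hj'.
  have step : y j' < y j'.+1.
    have /andP[_ a] := hy1 j' (ltnW hj').
    have /andP[b _] := hy1 j'.+1 hj'.
    by apply: (lt_le_trans a); apply: (le_trans (hhl j' hj')); apply: ltW.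
  have [e|l] : (j = j' \/ j < j')%nat by lia.
    by subst.
  by apply: (lt_trans (IH l (ltnW hj'))).
set rs := map y (iota 0 m).
have urs : uniq rs.
  rewrite map_inj_in_uniq ?iota_uniq // => i j; rewrite !mem_iota /= !add0n => hi0 hj e.
  have [h|[h|h]] : (i < j \/ j < i \/ i = j)%nat by lia.
  - by have := hinc i j h hj; rewrite e ltxx.
  - by have := hinc j i h hi0; rewrite e ltxx.
  - by [].
have arp : all (root p) rs.
  by apply/allP => z /mapP [j]; rewrite mem_iota add0n /= => hj ->; apply: hy2.
have srs : size p = (size rs).+1 by rewrite size_map size_iota.
have := all_roots_prod_XsubC srs arp; rewrite uniq_rootsE (monicP mp) scale1r => /(_ urs) ->.
exists y; split => //.
by rewrite /rs big_map -(big_mkord xpredT (fun j => 'X - (y j)%:P)) /index_iota subn0.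
Qed.
End Roots.
Section Mono.
Variable R : rcfType.
Variables (r n : nat) (x : nat -> nat -> R).
Hypothesis L1 : forall b i, (b < n)%nat -> (i < r)%nat -> x b i < x b i.+1.
Hypothesis L2 : forall b, (b.+1 < n)%nat -> x b r < x b.+1 0.

Lemma M2 b i j : (b < n)%nat -> (i < j)%nat -> (j <= r)%nat -> x b i < x b j.
Proof.
move=> hb; elim: j => [//|j IH] hij hj.
have [e|l] : (i = j \/ i < j)%nat by lia.
  by subst; apply: L1.
by apply: (lt_trans (IH l (ltnW hj))); apply: L1.
Qed.

Lemma M0 b i j : (b < n)%nat -> (i <= j)%nat -> (j <= r)%nat -> x b i <= x b j.
Proof.
move=> hb hij hj; have [e|l] : (i = j \/ i < j)%nat by lia.
  by subst.
by apply: ltW; apply: M2.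
Qed.

Lemma M1 b b' i j : (b < b')%nat -> (b' < n)%nat -> (i <= r)%nat -> (j <= r)%nat ->
  x b i < x b' j.
Proof.
move=> hbb hb' hi hj; elim: b' hbb hb' j hj => [//|b' IH] hbb hb' j hj.
have h1 : x b' r < x b'.+1 j.
  by apply: (lt_le_trans (L2 _ hb')); apply: M0.
have [e|l] : (b = b' \/ b < b')%nat by lia.
  by subst; apply: (le_lt_trans _ h1); apply: M0 => //; lia.
by apply: (lt_trans (IH l (ltnW hb') r (leqnn r))).
Qed.

End Mono.

Section Sign.
Variable R : rcfType.

Lemma prod_root (f : nat -> R) m j : (j < m)%nat ->
  (\prod_(b < m) ('X - (f b)%:P)).[f j] = 0.
Proof.
move=> hj; rewrite horner_prod (bigD1 (Ordinal hj)) //= hornerXsubC subrr.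
by rewrite mul0r.
Qed.

Lemma sign_sq k : ((-1) ^+ k : R) * (-1) ^+ k = 1.
Proof. by rewrite -exprD addnn -mul2n exprM sqrrN !expr1n. Qed.

Lemma neg_prod (s a b : R) : s * s = 1 -> 0 < s * a -> 0 < s * b -> a * b > 0.
Proof.
move=> ss ha hb; have -> : a * b = (s * a) * (s * b).
  by rewrite mulrACA ss mul1r.
exact: mulr_gt0.
Qed.
End Sign.
Definition Bd (R : rcfType) (r : nat) : R := (expn r r)%:R / (expn (r - 1) (r - 1))%:R.

Lemma hP_n0 (R : comNzRingType) r l : hP R r l 0 = 1.
Proof. by rewrite /hP big_ord1 /= subn0 expr0 mul1r bin0 scale1r expr0. Qed.

Lemma dm r m j : (j < r)%nat -> ((m * r + j) %/ r = m /\ (m * r + j) %% r = j)%nat.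
Proof.
move=> hj; have r0 : (0 < r)%nat by lia.
by rewrite divnMDl // divn_small // addn0 modnMDl modn_small.
Qed.

Section Pos.
Variable R : rcfType.
Variable r : nat.
Hypothesis hr : (1 < r)%nat.

Let r_gt0 : (0 < r)%nat. Proof. by lia. Qed.
Let a : R := (r - 1)%:R.
Let rr : R := r%:R.
Let rho : R := a / rr.
Let B : R := Bd R r.

Let a_gt0 : 0 < a. Proof. by rewrite /a ltr0n; lia. Qed.
Let rr_gt0 : 0 < rr. Proof. by rewrite /rr ltr0n. Qed.
Let rho_gt0 : 0 < rho. Proof. by rewrite /rho divr_gt0. Qed.
Let rra : rr - a = 1.
Proof. rewrite /rr /a natrB; last by lia. by rewrite opprB addrC subrK. Qed.

Lemma BR : B * rho ^+ (r - 1) = rr.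
Proof.
rewrite /B /Bd /rho /a /rr !natrX.
have -> : (r%:R : R) ^+ r = r%:R * r%:R ^+ (r - 1).
  by rewrite -exprS; congr (_ ^+ _); lia.
rewrite expr_div_n.
field.
rewrite expf_neq0 ?andbT; last by rewrite pnatr_eq0; lia.
by rewrite expf_neq0 // pnatr_eq0; lia.
Qed.

Definition Tn n l := (hP R r l n).[B] / (a ^+ n * rho ^+ l).

Lemma RA n l : (l.+1 < r)%nat -> a * Tn n.+1 l.+1 = rr * Tn n.+1 l - Tn n l.+1.
Proof.
move=> hl; rewrite /Tn (@hP_recA R r r_gt0 l n) hornerE.
set v2 := (hP R r l n.+1).[B]; set v3 := (hP R r l.+1 n).[B].
rewrite hornerN -/v3 !exprS /rho.
have a0 : a != 0 by rewrite gt_eqF.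
have r0 : rr != 0 by rewrite gt_eqF.
have A0 : a ^+ n != 0 by rewrite expf_neq0.
have P0 : (a / rr) ^+ l != 0 by rewrite expf_neq0 // mulf_neq0 // invr_eq0.
move: A0 P0; set A := a ^+ n; set P := (a / rr) ^+ l => A0 P0.
field; rewrite ?a0 ?r0 ?A0 ?P0 //.
Qed.

Lemma RB n : a * Tn n.+1 0 = rr * Tn n (r - 1) - Tn n 0.
Proof.
rewrite /Tn (@hP_recB R r r_gt0 n) hornerD hornerN (mulrC 'X) hornerMX.
have -> : r.-1 = (r - 1)%nat by lia.
set v2 := (hP R r (r - 1) n).[B]; set v3 := (hP R r 0 n).[B].
rewrite -BR !expr0 !mulr1 exprS.
have a0 : a != 0 by rewrite gt_eqF.
have A0 : a ^+ n != 0 by rewrite expf_neq0.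
have P0 : rho ^+ (r - 1) != 0 by rewrite expf_neq0 // gt_eqF.
move: A0 P0; set A := a ^+ n; set P := rho ^+ (r - 1) => A0 P0.
field; rewrite ?a0 ?A0 ?P0 //.
Qed.

Definition tseq N := Tn (N %/ r)%nat (N %% r)%nat.

Lemma tt_rec N : (r <= N)%nat -> a * tseq N = rr * tseq N.-1 - tseq (N - r).
Proof.
move=> hN; rewrite /tseq.
have hq := divn_eq N r.
set q := (N %/ r)%nat in hq *; set l := (N %% r)%nat in hq *.
have hl : (l < r)%nat by rewrite ltn_mod.
have [n hn] : exists n, q = n.+1.
  exists q.-1; have : (0 < q)%nat by nia.
  by lia.
rewrite hn in hq *.
case: l hl hq => [|l'] hl hq.
  have e1 : N.-1 = (n * r + (r - 1))%nat by nia.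
  have e2 : (N - r = n * r + 0)%nat by nia.
  have hr1 : (r - 1 < r)%nat by lia.
  rewrite e1 e2; have [-> ->] := @dm r n _ hr1.
  have [-> ->] := @dm r n 0 r_gt0.
  exact: RB.
have e1 : N.-1 = (n.+1 * r + l')%nat by nia.
have e2 : (N - r = n * r + l'.+1)%nat by nia.
rewrite e1 e2; have [-> ->] := @dm r n.+1 l' (ltnW hl).
have [-> ->] := @dm r n l'.+1 hl.
exact: RA.
Qed.

Lemma tt_small k : (k < r)%nat -> tseq k = rho ^- k.
Proof.
move=> hk; rewrite /tseq divn_small // modn_small // /Tn hP_n0 hornerC expr0 mul1r.
by rewrite mul1r.
Qed.

Lemma rho_lt1 : rho < 1.
Proof. by rewrite /rho ltr_pdivrMr // mul1r -subr_gt0 rra. Qed.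

Lemma tt_step N : (forall i j, (i < j)%nat -> (j <= N)%nat -> tseq i < tseq j) -> 0 < tseq N ->
  tseq N < tseq N.+1.
Proof.
move=> hinc hpos.
have [hs|hs] : (N.+1 < r \/ r <= N.+1)%nat by lia.
  rewrite !tt_small //; last by lia.
  rewrite exprS invfM mulrC ltr_pMr ?invr_gt0 ?exprn_gt0 //.
  by rewrite invf_gt1 // rho_lt1.
have h := tt_rec N.+1 hs; rewrite /= in h.
have hlt : tseq (N.+1 - r) < tseq N by apply: hinc => //; lia.
have : a * tseq N < a * tseq N.+1.
  rewrite h; have -> : rr * tseq N = a * tseq N + tseq N.
    by rewrite -[rr](subrK a) rra mulrDl mul1r addrC.
  by rewrite -addrA ltrDl subr_gt0.
by rewrite ltr_pM2l.
Qed.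

Lemma tt_incr N : (forall i j, (i < j)%nat -> (j <= N)%nat -> tseq i < tseq j) /\ 0 < tseq N.
Proof.
elim: N => [|N [IH1 IH2]].
  split; first by move=> i j hij hj; lia.
  by rewrite tt_small // expr0 invr1.
have hs := tt_step N IH1 IH2.
split; last exact: lt_trans hs.
move=> i j hij hj.
have [e|lt] : (j = N.+1 \/ j <= N)%nat by lia.
  subst j; have [e|lt] : (i = N \/ i < N)%nat by lia.
    by subst.
  by apply: lt_trans hs; apply: IH1.
exact: IH1.
Qed.

Lemma posB l n : (l < r)%nat -> 0 < (hP R r l n).[B].
Proof.
move=> hl; have [_ h] := tt_incr (n * r + l).
move: h; rewrite /tseq; have [-> ->] := @dm r n l hl; rewrite /Tn => h.
have d0 : 0 < a ^+ n * rho ^+ l by rewrite mulr_gt0 ?exprn_gt0.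
by rewrite -(divfK (lt0r_neq0 d0) (hP R r l n).[B]) mulr_gt0.
Qed.

End Pos.
Section Main.
Variable R : rcfType.
Variable r : nat.
Hypothesis hr : (1 < r)%nat.

Let r_gt0 : (0 < r)%nat. Proof. by lia. Qed.

Local Notation BB := (Bd R r).
Let posB l n (hl : (l < r)%nat) : 0 < (hP R r l n).[BB] := @posB R r hr l n hl.

Definition win n l i : {poly R} :=
  if (l + i < r)%nat then hP R r (l + i) n else hP R r (l + i - r) n.+1.

Definition rts (x : nat -> nat -> R) n l i : {poly R} :=
  if (l + i < r)%nat then \prod_(b < n) ('X - (x b.+1 i)%:P)
  else \prod_(b < n.+1) ('X - (x b i)%:P).

Definition InvW n l := exists x : nat -> nat -> R,
  [/\ (forall b i, (b < n.+1)%nat -> (i < r)%nat -> x b i < x b i.+1),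
      (forall b, (b.+1 < n.+1)%nat -> x b r < x b.+1 0),
      0 < x 0%nat 0%nat, x n r < BB &
      (forall i, (i <= r)%nat -> win n l i = rts x n l i)].

Lemma hprod (f : nat -> R) m t :
  (\prod_(b < m) ('X - (f b)%:P)).[t] = \prod_(b < m) (t - f b).
Proof. by rewrite horner_prod; apply: eq_bigr => b _; rewrite hornerXsubC. Qed.

Lemma size_prodX (f : nat -> R) m : size (\prod_(b < m) ('X - (f b)%:P)) = m.+1.
Proof. by rewrite -(big_mkord xpredT (fun b => 'X - (f b)%:P)) size_prod_XsubC size_iota subn0. Qed.

Lemma monic_prodX (f : nat -> R) m : \prod_(b < m) ('X - (f b)%:P) \is monic.
Proof. exact: monic_prod_XsubC. Qed.

Lemma stepA n l : (l.+1 < r)%nat -> InvW n l -> InvW n l.+1.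
Proof.
move=> hl [x [L1 L2 x0 xB W]].
have Epr : hP R r l n.+1 = \prod_(b < n.+1) ('X - (x b r)%:P).
  have := W r (leqnn r); rewrite /win /rts.
  have -> : (l + r < r)%nat = false by lia.
  by rewrite addnK.
have Ep1 : hP R r l.+1 n = \prod_(b < n) ('X - (x b.+1 1%nat)%:P).
  have := W 1%nat (ltnW hr); rewrite /win /rts.
  have -> : (l + 1 < r)%nat = true by lia.
  by rewrite addn1.
have Enew := @hP_recA R r r_gt0 l n.
set pr := \prod_(b < n.+1) ('X - (x b r)%:P) in Epr.
set p1 := \prod_(b < n) ('X - (x b.+1 1%nat)%:P) in Ep1.
have M0' := @M0 R r n.+1 x L1. have M1' := @M1 R r n.+1 x L1 L2. have M2' := @M2 R r n.+1 x L1.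
have snew : size (hP R r l.+1 n.+1) = n.+2.
  rewrite Enew Epr Ep1 size_polyDl ?size_polyN /pr /p1 ?(size_prodX (fun b => x b r)) //.
  by rewrite (size_prodX (fun b => x b.+1 1%nat)).
have mnew : hP R r l.+1 n.+1 \is monic.
  rewrite monicE Enew Epr Ep1 lead_coefDl ?size_polyN /pr /p1.
    exact: (monic_prodX (fun b => x b r)).
  by rewrite (size_prodX (fun b => x b r)) (size_prodX (fun b => x b.+1 1%nat)).
pose lo j := x j r.
pose hi j := if (j < n)%nat then x j.+1 1%nat else BB.
have S1 : forall j, (j <= n)%nat -> 0 < (-1) ^+ (n - j) * p1.[x j r].
  move=> j hj; rewrite /p1 (hprod (fun b => x b.+1 1%nat)).
  apply: (@sgprod R (fun b => x b.+1 1%nat) (x j r) j n) => // b hb.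
    have [e|lt] : (b.+1 = j \/ b.+1 < j)%nat by lia.
      by subst j; apply: M2' => //; lia.
    by apply: M1' => //; lia.
  by move=> hbn; apply: M1' => //; lia.
have [y [hy Ey]] : exists y : nat -> R, (forall j, (j < n.+1)%nat -> lo j < y j < hi j) /\
     hP R r l.+1 n.+1 = \prod_(j < n.+1) ('X - (y j)%:P).
  apply: find_roots => //.
  - move=> j hj; rewrite /lo /hi; case: ifP => hjn; last by have -> : j = n by lia.
    by apply: M1' => //; lia.
  - move=> j hj; rewrite /lo /hi; have -> : (j < n)%nat = true by lia.
    by apply: M0' => //; lia.
  - move=> j hj; rewrite /lo /hi Enew Epr Ep1 !hornerE.
    have -> : pr.[x j r] = 0 by rewrite /pr (@prod_root R (fun b => x b r) n.+1 j hj).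
    have := S1 j hj; case: ifP => hjn => S1j.
      have -> : p1.[x j.+1 1%nat] = 0 by rewrite /p1 (@prod_root R (fun b => x b.+1 1%nat) n j hjn).
      have S2 : 0 < (-1) ^+ (n - j) * pr.[x j.+1 1%nat].
        have -> : (n - j = n.+1 - j.+1)%nat by lia.
        rewrite /pr (hprod (fun b => x b r)).
        apply: (@sgprod R (fun b => x b r) _ j.+1 n.+1) => //.
          by move=> b hb; apply: M1' => //; lia.
        move=> b hb hbn; have [e|lt] : (b = j.+1 \/ j.+1 < b)%nat by lia.
          by subst b; apply: M2' => //; lia.
        by apply: M1' => //; lia.
      have := @neg_prod R _ _ _ (@sign_sq R (n - j)) S1j S2.
      rewrite sub0r subr0 mulNr oppr_lt0 //.
    have e : j = n by lia.
    subst j; rewrite subnn expr0 mul1r in S1j.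
    have := posB l.+1 n.+1 hl; rewrite Enew Epr Ep1 => pB.
    rewrite !hornerE in pB; by rewrite sub0r mulNr oppr_lt0 mulr_gt0.
pose x' b i := if (i < r)%nat then x b i.+1 else y b.
exists x'; split.
- move=> b i hb hir; rewrite /x' hir.
  case: ifP => hi1; first exact: L1.
  have e : i.+1 = r by lia.
  by rewrite e; have /andP[] := hy b hb.
- move=> b hb; rewrite /x' ltnn r_gt0.
  have /andP[_] := hy b (ltnW hb); rewrite /hi; have -> : (b < n)%nat = true by lia.
  done.
- by rewrite /x' r_gt0; apply: (lt_trans x0); apply: L1.
- rewrite /x' ltnn; have /andP[_] := hy n (leqnn _); by rewrite /hi ltnn.
- move=> i hir; have [e|lt] : (i = r \/ i < r)%nat by lia.
    subst i; rewrite /win /rts.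
    have -> : (l.+1 + r < r)%nat = false by lia.
    rewrite addnK Ey; apply: eq_bigr => b _; by rewrite /x' ltnn.
  have := W i.+1 lt; rewrite /win /rts addSnnS => ->.
  case: ifP => _; apply: eq_bigr => b _; by rewrite /x' lt.
Qed.

Lemma stepB n : InvW n r.-1 -> InvW n.+1 0.
Proof.
move=> [x [L1 L2 x0 xB W]].
have Epr : hP R r r.-1 n.+1 = \prod_(b < n.+1) ('X - (x b r)%:P).
  have := W r (leqnn r); rewrite /win /rts.
  have -> : (r.-1 + r < r)%nat = false by lia.
  by rewrite addnK.
have Ep1 : hP R r 0 n.+1 = \prod_(b < n.+1) ('X - (x b 1%nat)%:P).
  have := W 1%nat (ltnW hr); rewrite /win /rts.
  have -> : (r.-1 + 1 < r)%nat = false by lia.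
  by have -> : (r.-1 + 1 - r = 0)%nat by lia.
have Enew := @hP_recB R r r_gt0 n.+1.
set pr := \prod_(b < n.+1) ('X - (x b r)%:P) in Epr.
set p1 := \prod_(b < n.+1) ('X - (x b 1%nat)%:P) in Ep1.
have M0' := @M0 R r n.+1 x L1. have M1' := @M1 R r n.+1 x L1 L2. have M2' := @M2 R r n.+1 x L1.
have spr : size pr = n.+2 by rewrite (size_prodX (fun b => x b r)).
have sp1 : size p1 = n.+2 by rewrite (size_prodX (fun b => x b 1%nat)).
have mpr : pr \is monic by exact: (monic_prodX (fun b => x b r)).
have sXpr : size ('X * pr) = n.+3.
  by rewrite mulrC size_mulX ?spr // -size_poly_eq0 spr.
have snew : size (hP R r 0 n.+2) = n.+3.
  by rewrite Enew Epr Ep1 size_polyDl ?size_polyN sXpr ?sp1.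
have mnew : hP R r 0 n.+2 \is monic.
  rewrite monicE Enew Epr Ep1 lead_coefDl ?size_polyN ?sXpr ?sp1 //.
  by rewrite mulrC lead_coefMX; apply: mpr.
have xpos : forall b i, (b < n.+1)%nat -> (0 < i)%nat -> (i <= r)%nat -> 0 < x b i.
  move=> b i hb hi0 hir; apply: (lt_trans x0).
  have [e|lt] : (b = 0 \/ 0 < b)%nat by lia.
    by subst b; apply: M2'.
  by apply: M1'.
pose lo j := if j is j'.+1 then x j' r else 0.
pose hi j := if j is j'.+1 then (if (j' < n)%nat then x j'.+1 1%nat else BB) else x 0%nat 1%nat.
have S1 : forall j, (j <= n.+1)%nat -> (0 < j)%nat ->
    0 < (-1) ^+ (n.+1 - j) * p1.[x j.-1 r].
  move=> j hj hj0; rewrite /p1 (hprod (fun b => x b 1%nat)).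
  apply: (@sgprod R (fun b => x b 1%nat) (x j.-1 r) j n.+1) => // b hb.
    have [e|lt] : (b = j.-1 \/ b < j.-1)%nat by lia.
      by subst b; apply: M2' => //; lia.
    by apply: M1' => //; lia.
  by move=> hbn; apply: M1' => //; lia.
have [y [hy Ey]] : exists y : nat -> R, (forall j, (j < n.+2)%nat -> lo j < y j < hi j) /\
     hP R r 0 n.+2 = \prod_(j < n.+2) ('X - (y j)%:P).
  apply: find_roots => //.
  - case=> [|j] hj; rewrite /lo /hi; first exact: xpos.
    case: ifP => hjn; last by have -> : j = n by lia.
    by apply: M1' => //; lia.
  - case=> [|j] hj; rewrite /lo /hi; first by apply: M0'.
    have -> : (j < n)%nat = true by lia.
    by apply: M0' => //; lia.
  - case=> [|j] hj; rewrite /lo /hi Enew Epr Ep1 !hornerE.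
      have T1 : 0 < (-1) ^+ (n.+1 - 0) * p1.[0].
        rewrite /p1 (hprod (fun b => x b 1%nat)).
        apply: (@sgprod R (fun b => x b 1%nat) 0 0 n.+1) => // b _ hb.
        exact: xpos.
      have T2 : 0 < (-1) ^+ (n.+1 - 0) * pr.[x 0%nat 1%nat].
        rewrite /pr (hprod (fun b => x b r)).
        apply: (@sgprod R (fun b => x b r) _ 0 n.+1) => // b _ hb.
        have [e|lt] : (b = 0 \/ 0 < b)%nat by lia.
          by subst b; apply: M2'.
        by apply: M1'.
      have -> : p1.[x 0%nat 1%nat] = 0 by rewrite /p1 (@prod_root R (fun b => x b 1%nat) n.+1 0).
      have := @neg_prod R _ _ _ (@sign_sq R (n.+1 - 0)) T1 T2 => hh.
      have x01 : 0 < x 0%nat 1%nat by exact: xpos.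
      rewrite subr0 mulNr oppr_lt0 mulrCA.
      by apply: mulr_gt0.
    have -> : pr.[x j r] = 0 by rewrite /pr (@prod_root R (fun b => x b r) n.+1 j).
    have := S1 j.+1 hj isT; rewrite /= => S1j.
    case: ifP => hjn.
      have -> : p1.[x j.+1 1%nat] = 0.
        by rewrite /p1 (@prod_root R (fun b => x b 1%nat) n.+1 j.+1).
      have S2 : 0 < (-1) ^+ (n.+1 - j.+1) * pr.[x j.+1 1%nat].
        rewrite /pr (hprod (fun b => x b r)).
        apply: (@sgprod R (fun b => x b r) _ j.+1 n.+1) => //.
          by move=> b hb; apply: M1' => //; lia.
        move=> b hb hbn; have [e|lt] : (b = j.+1 \/ j.+1 < b)%nat by lia.
          by subst b; apply: M2' => //; lia.
        by apply: M1' => //; lia.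
      have := @neg_prod R _ _ _ (@sign_sq R (n.+1 - j.+1)) S1j S2 => hh.
      have xj : 0 < x j.+1 1%nat by apply: xpos => //; lia.
      rewrite mulr0 sub0r subr0 mulNr oppr_lt0 mulrCA.
      by apply: mulr_gt0.
    have e : j = n by lia.
    subst j; rewrite subnn expr0 mul1r in S1j.
    have := posB 0 n.+2 r_gt0; rewrite Enew Epr Ep1 => pB.
    rewrite !hornerE in pB.
    by rewrite mulr0 sub0r mulNr oppr_lt0 mulr_gt0.
pose x' b i := if b is b'.+1 then (if (i < r)%nat then x b' i.+1 else y b)
               else (if (i < r)%nat then y 0%nat * i.+1%:R / r.+1%:R else y 0%nat).
have y0 : 0 < y 0%nat by have /andP[] := hy 0%nat isT.
exists x'; split.
- case=> [|b] i hb hir; rewrite /x' hir.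
    case: ifP => hi1.
      rewrite ltr_pM2r ?invr_gt0 ?ltr0n // ltr_pM2l // ltr_nat; lia.
    rewrite -mulrA gtr_pMr // ltr_pdivrMr ?ltr0n // mul1r ltr_nat; lia.
  case: ifP => hi1; first by apply: L1 => //; lia.
  have e : i.+1 = r by lia.
  by rewrite e; have /andP[] := hy b.+1 hb.
- case=> [|b] hb; rewrite /x' ltnn r_gt0.
    by have /andP[_] := hy 0%nat isT.
  have /andP[_] := hy b.+1 (ltnW hb); rewrite /hi; have -> : (b < n)%nat = true by lia.
  done.
- by rewrite /x' r_gt0 divr_gt0 ?mulr_gt0 ?ltr0n.
- rewrite /x' ltnn; have /andP[_] := hy n.+1 (leqnn _); by rewrite /hi ltnn.
- move=> i hir; have [e|lt] : (i = r \/ i < r)%nat by lia.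
    subst i; rewrite /win /rts.
    have -> : (0 + r < r)%nat = false by lia.
    rewrite add0n subnn Ey; apply: eq_bigr => -[[|b] hb] _; by rewrite /x' ltnn.
  have := W i.+1 lt; rewrite /win /rts add0n lt.
  have -> : (r.-1 + i.+1 < r)%nat = false by lia.
  have -> : (r.-1 + i.+1 - r = i)%nat by lia.
  move=> ->; apply: eq_bigr => b _; by rewrite /x' lt.
Qed.

Lemma B_gt1 : 1 < BB.
Proof.
rewrite /Bd ltr_pdivlMr ?ltr0n ?expn_gt0; last by apply/orP; left; lia.
rewrite mul1r ltr_nat.
apply: (@leq_trans (expn r (r - 1))); first by rewrite ltn_exp2r; lia.
by rewrite leq_pexp2l //; lia.
Qed.

Lemma baseW : InvW 0 0.
Proof.
pose x (b i : nat) : R := i.+1%:R / r.+1%:R.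
exists x; split.
- move=> b i _ hi; rewrite /x ltr_pM2r ?invr_gt0 ?ltr0n // ltr_nat //.
- by move=> b hb; lia.
- by rewrite /x divr_gt0 ?ltr0n.
- by rewrite /x divff ?pnatr_eq0 // B_gt1.
- move=> i hi; rewrite /win /rts add0n.
  case: ifP => hir; first by rewrite big_ord0 hP_n0.
  have e : i = r by lia.
  subst i; rewrite subnn big_ord1 /x divff ?pnatr_eq0 //.
  rewrite /hP big_ord_recr big_ord1 /= !subn0 subnn !expr0 !mul1r !muln0 !muln1.
  rewrite !addn0 add0n bin0 bin1 expr1 scale1r mulN1r scaleNr.
  by rewrite -[1%:R]/1 scale1r -polyCN.
Qed.

Lemma InvA n l : (l < r)%nat -> InvW n 0 -> InvW n l.
Proof.
elim: l => [//|l IH] hl H.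
by apply: stepA => //; apply: IH => //; lia.
Qed.

Lemma InvAll n l : (l < r)%nat -> InvW n l.
Proof.
move=> hl; apply: InvA => //; elim: n => [|n IH]; first exact: baseW.
apply: stepB; apply: InvA => //; lia.
Qed.

Lemma final n l : (l < r)%nat -> exists y : nat -> R,
  hP R r l n.+1 = \prod_(b < n.+1) ('X - (y b)%:P) /\
  (forall b, (b < n.+1)%nat -> 0 < y b < BB).
Proof.
move=> hl; have [x [L1 L2 x0 xB W]] := InvAll n l hl.
exists (fun b => x b r); split.
  have := W r (leqnn r); rewrite /win /rts.
  have -> : (l + r < r)%nat = false by lia.
  by rewrite addnK.
move=> b hb; apply/andP; split.
  apply: (lt_le_trans x0).
  have [e|lt] : (b = 0 \/ 0 < b)%nat by lia.
    by subst b; apply: ltW; apply: (@M2 R r n.+1 x L1) => //; lia.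
  by apply: ltW; apply: (@M1 R r n.+1 x L1 L2).
apply: le_lt_trans xB.
have [e|lt] : (b = n \/ b < n)%nat by lia.
  by subst.
by apply: ltW; apply: (@M1 R r n.+1 x L1 L2).
Qed.

End Main.

Theorem lemma3 (r l n : nat) (hr : leq 2 r) (hl : leq l.+1 r) (hn : leq 1 n) :
  (forall z : algC, root (hpoly r l n) z ->
     [&& z \is Num.real, 0 < z & z < hbound r])
  /\ Rlt (Rdiv (pow (INR r) r) (pow (INR (subn r 1)) (subn r 1)))
         (Rmult (exp (IZR 1)) (INR r)).
Proof.
split; last first.
  by apply: real_part; lia.
have [n' En] : exists n', n = n'.+1 by exists n.-1; lia.
subst n.
have [y [Ey hy]] := @final algR r hr n' l hl.
have Eh : hpoly r l n'.+1 = map_poly algRval (hP algR r l n'.+1).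
  rewrite /hpoly /hP rmorph_sum; apply: eq_bigr => k _.
  by rewrite /= map_polyZ map_polyXn rmorphM rmorphXn rmorphN1 rmorph_nat.
move=> z rz; rewrite Eh Ey rmorph_prod /root horner_prod in rz.
have /prodf_eq0 [b _ hb] := rz.
rewrite /= map_polyXsubC hornerXsubC subr_eq0 in hb.
rewrite (eqP hb) algRvalP /=.
have /andP[h1 h2] := hy b (ltn_ord b).
have -> : hbound r = algRval (Bd algR r) by rewrite /Bd fmorph_div !rmorph_nat.
by apply/andP; split; [exact: h1 | exact: h2].
Qed.
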